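(* Let $F/\mathbb{F}_q$ be a function field of genus $g$ with full constant field $\mathbb{F}_q$, $\sigma\in\mathrm{Aut}(F/\mathbb{F}_q)$, $N,m,l$ positive integers, $P_1,\dots,P_N$ rational places such that the $mN$ places $P_i^{\sigma^j}$ ($1\le i\le N$, $0\le j\le m-1$) are pairwise distinct rational places, and $D$ a divisor of degree $e$ with $D^\sigma=D$ and no $P_i^{\sigma^j}$ in $\mathrm{Supp}(D)$. Let $1\le s\le m$, let $\mathbf{y}=(y_{i,j})\in\mathbb{F}_q^{m\times N}$ ($1\le i\le N$, $1\le j\le m$), let \[\kappa=\left\lfloor\frac{N(m-s+1)-el+(s+1)(g-1)+1}{e(s+1)}\right\rfloor,\] and let $A_0\in\mathcal{L}((\kappa+l)D)$, $A_1,\dots,A_s\in\mathcal{L}(\kappa D)$ satisfy \[A_0(P_i^{\sigma^j})+A_1(P_i^{\sigma^j})y_{i,j+1}+\cdots+A_s(P_i^{\sigma^j})y_{i,j+s}=0\quad\text{for all }1\le i\le N,\ 0\le j\le m-s.\] If $f\in\mathcal{L}(lD)$ is such that the encoding $\pi(f)=\big((f(P_i),f(P_i^{\sigma}),\dots,f(P_i^{\sigma^{m-1}}))^T\big)_{i=1}^N$ agrees with $\mathbf{y}$ in at least $t$ columns (i.e., for at least $t$ indices $i$ one has $y_{i,j+1}=f(P_i^{\sigma^j})$ for all $0\le j\le m-1$), where $t>\frac{(\kappa+l)e}{m-s+1}$, then \[A_0+A_1f+A_2f^{\sigma^{-1}}+\cdots+A_sf^{\sigma^{-(s-1)}}=0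 .\]
   Context: For a place $P$ and $f\in F$ with $\nu_P(f)\ge 0$, $f(P)$ denotes the residue class of $f$ at $P$. For $\phi\in\mathrm{Aut}(F/\mathbb{F}_q)$, $f^{\phi}$ denotes the image of $f$ under $\phi$, $P^{\phi}=\{\phi(x):x\in P\}$, and $G^{\phi}=\sum m_PP^{\phi}$ for a divisor $G=\sum m_PP$; with these conventions $f(P^{\phi})=f^{\phi^{-1}}(P)$ whenever both sides are defined. $\mathcal{L}(G)=\{f\in F^*:\mathrm{div}(f)+G\ge 0\}\cup\{0\}$. *)

(* Defs.v *)
(* Algebraic function fields F/F_q set up from scratch:
   places are represented by their normalized discrete valuations. *)
From HB Require Import structures.
From mathcomp Require Import all_boot all_order all_algebra.
Set Implicit Arguments. Unset Strict Implicit. Unset Printing Implicit Defensive.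
Import Order.TTheory GRing.Theory Num.Theory.
Local Open Scope ring_scope.

Section FunctionFields.
Variables (K : finFieldType) (F : fieldType) (iota : {rmorphism K -> F}).

Definition transcendental (x : F) : Prop :=
  forall p : {poly K}, p != 0 -> (map_poly iota p).[x] != 0.

(* F/K is an algebraic function field in one variable: F is a finite
   extension of a rational function field K(x), x transcendental. *)
Definition is_function_field : Prop :=
  exists x : F, transcendental x /\
  exists (n : nat) (b : 'I_n -> F), forall z : F,
    exists (q : {poly K}) (p : 'I_n -> {poly K}),
      (map_poly iota q).[x] != 0 /\
      z * (map_poly iota q).[x] = \sum_(i < n) (map_poly iota (p i)).[x] * b i.

Definition full_constant_field : Prop :=
  forall z : F, (exists p : {poly K}, p != 0 /\ (map_poly iota p).[z] = 0) ->
    exists c : K, z = iota c.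

(* A place P of F/K, represented by its normalized discrete valuation v_P
   (with the convention v_P 0 = 0 in place of +oo). *)
Definition is_place (v : F -> int) : Prop :=
  [/\ v 0 = 0,
      (forall x y, x != 0 -> y != 0 -> v (x * y) = v x + v y),
      (forall x y, x != 0 -> y != 0 -> x + y != 0 -> Order.min (v x) (v y) <= v (x + y)),
      (exists t, v t = 1)
    & (forall c : K, c != 0 -> v (iota c) = 0)].

Definition inP (v : F -> int) (z : F) : bool := (z == 0) || (0 < v z).

(* rational place: residue field O_P/P equals K *)
Definition rational_place (v : F -> int) : Prop :=
  is_place v /\ forall z, 0 <= v z -> exists c : K, inP v (z - iota c).

(* residue class z(P) for a rational place (meaningful when v z >= 0) *)
Definition residue (v : F -> int) (z : F) : K :=
  odflt 0 [pick c : K | inP v (z - iota c)].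

(* deg P = [O_P/P : K] = n *)
Definition place_deg (v : F -> int) (n : nat) : Prop :=
  exists b : 'I_n -> F, (forall i, 0 <= v (b i)) /\
    (forall z, 0 <= v z -> exists c : 'I_n -> K,
        inP v (z - \sum_(i < n) iota (c i) * b i)) /\
    (forall c : 'I_n -> K, inP v (\sum_(i < n) iota (c i) * b i) ->
        forall i, c i = 0).

(* Divisors: functions from places (valuations) to int with finite support. *)
Definition divisor := (F -> int) -> int.

Definition div_deg (G : divisor) (e : int) : Prop :=
  exists (n : nat) (ps : 'I_n -> (F -> int)) (ds : 'I_n -> nat),
    injective ps /\ (forall i, is_place (ps i) /\ place_deg (ps i) (ds i)) /\
    (forall v, G v != 0 -> exists i, v = ps i) /\
    e = \sum_(i < n) G (ps i) * (ds i)%:Z.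

Definition scale_div (k : int) (G : divisor) : divisor := fun v => k * G v.

Definition inL (G : divisor) (f : F) : Prop :=
  f = 0 \/ forall v, is_place v -> 0 <= v f + G v.

Definition ell (G : divisor) (n : nat) : Prop :=
  exists b : 'I_n -> F, (forall i, inL G (b i)) /\
    (forall c : 'I_n -> K, \sum_(i < n) iota (c i) * b i = 0 -> forall i, c i = 0) /\
    (forall z, inL G z -> exists c : 'I_n -> K, z = \sum_(i < n) iota (c i) * b i).

Definition is_genus (g : nat) : Prop :=
  (exists G a n, div_deg G a /\ ell G n /\ a - n%:Z + 1 = g%:Z) /\
  (forall G a n, div_deg G a -> ell G n -> a - n%:Z + 1 <= g%:Z).

End FunctionFields.

Definition kappa (N m l s g : nat) (e : int) : int :=
  Num.floor (((N%:Z * (m - s + 1)%:Z - e * l%:Z + (s.+1)%:Z * (g%:Z - 1) + 1)%:~R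
              / (e * (s.+1)%:Z)%:~R : rat)).

(* Main.v *)
Require Import Defs.
From mathcomp Require Import all_boot all_order all_algebra.
From mathcomp Require Import boolp zify ring.
Set Implicit Arguments. Unset Strict Implicit. Unset Printing Implicit Defensive.
Import Order.TTheory GRing.Theory Num.Theory.
Local Open Scope ring_scope.

Section Val.
Variables (K : finFieldType) (F : fieldType) (iota : {rmorphism K -> F}).

Definition geq (v : F -> int) (k : int) (z : F) := z = 0 \/ k <= v z.

Variable v : F -> int.
Hypothesis hv : is_place iota v.

Lemma v_iota c : c != 0 -> v (iota c) = 0.
Proof. by move: hv; rewrite /is_place => -[_ _ _ _ H]; apply: H. Qed.

Lemma vM x y : x != 0 -> y != 0 -> v (x * y) = v x + v y.
Proof. by move: hv; rewrite /is_place => -[_ H _ _ _]; apply: H. Qed.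

Lemma vN x : v (- x) = v x.
Proof.
have [->|x0] := eqVneq x 0; first by rewrite oppr0.
have -> : - x = iota (-1) * x by rewrite rmorphN rmorph1 mulN1r.
rewrite vM ?v_iota ?add0r //; first by rewrite oppr_eq0 oner_eq0.
by rewrite rmorphN rmorph1 oppr_eq0 oner_eq0.
Qed.

Lemma geq0 k : geq v k 0. Proof. by left. Qed.

Lemma geqD k a b : geq v k a -> geq v k b -> geq v k (a + b).
Proof.
case=> [->|ha]; first by rewrite add0r.
case=> [->|hb]; first by rewrite addr0; right.
have [->|ab0] := eqVneq (a + b) 0; first by left.
have [->|a0] := eqVneq a 0; first by rewrite add0r; right.
have [->|b0] := eqVneq b 0; first by rewrite addr0; right.
right; move: hv; rewrite /is_place => -[_ _ H _ _].
apply: le_trans (H _ _ a0 b0 ab0).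
by rewrite le_min ha hb.
Qed.

Lemma geqN k a : geq v k a -> geq v k (- a).
Proof. by case=> [->|h]; [rewrite oppr0; left | right; rewrite vN]. Qed.

Lemma geqB k a b : geq v k a -> geq v k b -> geq v k (a - b).
Proof. by move=> ha hb; apply: geqD => //; apply: geqN. Qed.

Lemma geqM k1 k2 a b : geq v k1 a -> geq v k2 b -> geq v (k1 + k2) (a * b).
Proof.
case=> [->|ha]; first by rewrite mul0r; left.
case=> [->|hb]; first by rewrite mulr0; left.
have [->|a0] := eqVneq a 0; first by rewrite mul0r; left.
have [->|b0] := eqVneq b 0; first by rewrite mulr0; left.
by right; rewrite vM // lerD.
Qed.

Lemma geq_le k1 k2 a : k1 <= k2 -> geq v k2 a -> geq v k1 a.
Proof. by move=> le; case=> [->|h]; [left|right; apply: le_trans h]. Qed.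

Lemma geq_iota c : geq v 0 (iota c).
Proof. by have [->|c0] := eqVneq c 0; [rewrite rmorph0; left|right; rewrite v_iota]. Qed.

Lemma geq_sum I (r : seq I) (P : pred I) k (E : I -> F) :
  (forall i, P i -> geq v k (E i)) -> geq v k (\sum_(i <- r | P i) E i).
Proof.
move=> H; elim/big_rec: _ => [|i x Pi hx]; first exact: geq0.
exact: geqD (H _ Pi) hx.
Qed.

Lemma inP_geq z : inP v z = `[< geq v 1 z >].
Proof.
apply/idP/asboolP.
  by case/orP=> [/eqP->|h]; [left|right; lia].
by rewrite /inP; case=> [->|h]; rewrite ?eqxx // orbC; apply/orP; left; lia.
Qed.

Definition cong z c := geq v 1 (z - iota c).

Lemma congD a b ca cb : cong a ca -> cong b cb -> cong (a + b) (ca + cb).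
Proof.
move=> ha hb; rewrite /cong rmorphD.
have -> : a + b - (iota ca + iota cb) = (a - iota ca) + (b - iota cb) by ring.
exact: geqD.
Qed.

Lemma congM a b ca cb : geq v 0 b -> cong a ca -> cong b cb -> cong (a * b) (ca * cb).
Proof.
move=> b0 ha hb; rewrite /cong rmorphM.
have -> : a * b - iota ca * iota cb = (a - iota ca) * b + iota ca * (b - iota cb) by ring.
apply: geqD.
  by have := geqM ha b0; rewrite addr0.
by have := geqM (geq_iota ca) hb; rewrite add0r.
Qed.

Lemma cong_sum I (r : seq I) (P : pred I) (E : I -> F) (c : I -> K) :
  (forall i, P i -> cong (E i) (c i)) ->
  cong (\sum_(i <- r | P i) E i) (\sum_(i <- r | P i) c i).
Proof.
move=> H; elim: r => [|x r IH]; first by rewrite !big_nil /cong rmorph0 subr0; left.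
rewrite !big_cons; case: ifP => // Px; exact: congD (H _ Px) IH.
Qed.

End Val.
Section Tau.
Variables (K : finFieldType) (F : fieldType) (iota : {rmorphism K -> F}).
Variables (sigma : {rmorphism F -> F}) (tau : F -> F).
Hypotheses (st : cancel sigma tau) (ts : cancel tau sigma)
  (si : forall c : K, sigma (iota c) = iota c).

Lemma tauD a b : tau (a + b) = tau a + tau b.
Proof. by apply: (can_inj st); rewrite rmorphD !ts. Qed.
Lemma tauM a b : tau (a * b) = tau a * tau b.
Proof. by apply: (can_inj st); rewrite rmorphM !ts. Qed.
Lemma tau0 : tau 0 = 0.
Proof. by apply: (can_inj st); rewrite ts rmorph0. Qed.
Lemma tauN a : tau (- a) = - tau a.
Proof. by apply: (can_inj st); rewrite rmorphN !ts. Qed.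
Lemma tau_iota c : tau (iota c) = iota c.
Proof. by apply: (can_inj st); rewrite ts si. Qed.
Lemma tau_inj : injective tau.
Proof. exact: can_inj ts. Qed.

Lemma itauD n a b : iter n tau (a + b) = iter n tau a + iter n tau b.
Proof. by elim: n => //= n ->; rewrite tauD. Qed.
Lemma itauM n a b : iter n tau (a * b) = iter n tau a * iter n tau b.
Proof. by elim: n => //= n ->; rewrite tauM. Qed.
Lemma itau0 n : iter n tau 0 = 0.
Proof. by elim: n => //= n ->; rewrite tau0. Qed.
Lemma itauN n a : iter n tau (- a) = - iter n tau a.
Proof. by elim: n => //= n ->; rewrite tauN. Qed.
Lemma itauB n a b : iter n tau (a - b) = iter n tau a - iter n tau b.
Proof. by rewrite itauD itauN. Qed.
Lemma itau_iota n c : iter n tau (iota c) = iota c.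
Proof. by elim: n => //= n ->; rewrite tau_iota. Qed.
Lemma itau_eq0 n a : (iter n tau a == 0) = (a == 0).
Proof.
elim: n => //= n <-; apply/eqP/eqP => [|->]; last exact: tau0.
by move=> h; apply: tau_inj; rewrite h tau0.
Qed.

Lemma tau_neq0 x : x != 0 -> tau x != 0.
Proof. by have := itau_eq0 1 x; rewrite /= => ->. Qed.

Lemma place_tau v : is_place iota v -> is_place iota (fun z => v (tau z)).
Proof.
rewrite /is_place => -[h0 hM hD [t ht] hc]; split.
- by rewrite tau0.
- move=> x y x0 y0; rewrite tauM hM //.
  + exact: tau_neq0.
  + exact: tau_neq0.
- move=> x y x0 y0 xy0; rewrite tauD hD ?tau_neq0 //.
  by rewrite -tauD tau_neq0.
- by exists (sigma t); rewrite st.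
- by move=> c c0; rewrite tau_iota hc.
Qed.

Lemma place_itau v n : is_place iota v -> is_place iota (fun z => v (iter n tau z)).
Proof.
move=> hv; elim: n => // n IH.
have H := place_tau IH.
suff -> : (fun z => v (iter n.+1 tau z)) = (fun z => v (iter n tau (tau z))) by [].
by apply: functional_extensionality_dep => z; rewrite iterSr.
Qed.

Lemma D_itau (D : (F -> int) -> int) :
  (forall v, is_place iota v -> D (fun z => v (tau z)) = D v) ->
  forall v n, is_place iota v -> D (fun z => v (iter n tau z)) = D v.
Proof.
move=> HD v n hv; elim: n => // n IH.
have H := HD _ (place_itau n hv).
suff <- : (fun z => v (iter n tau (tau z))) = (fun z => v (iter n.+1 tau z)) by rewrite H.
by apply: functional_extensionality_dep => z; rewrite iterSr.
Qed.

End Tau.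

Lemma residueP (K : finFieldType) (F : fieldType) (iota : {rmorphism K -> F}) v z :
  rational_place iota v -> geq v 0 z -> cong iota v z (residue iota v z).
Proof.
case=> hv hr hz.
have [c hc] : exists c : K, inP v (z - iota c).
  by case: hz => [->|hz]; [exists 0; rewrite rmorph0 subr0 /inP eqxx | exact: hr].
rewrite /residue; case: pickP => [c' /= hc'|H]; last by move: (H c) => /=; rewrite hc.
by move: hc'; rewrite /cong inP_geq // => /asboolP.
Qed.
Section Deg.
Variables (K : finFieldType) (F : fieldType) (iota : {rmorphism K -> F}).

Lemma geq_inP v z : is_place iota v -> inP v z -> geq v 1 z.
Proof. by move=> hv; rewrite inP_geq // => /asboolP. Qed.
Lemma inP_of_geq v z : is_place iota v -> geq v 1 z -> inP v z.
Proof. by move=> hv h; rewrite inP_geq //; apply/asboolP. Qed.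

Lemma place_deg_le v n1 n2 : is_place iota v ->
  place_deg iota v n1 -> place_deg iota v n2 -> (n1 <= n2)%N.
Proof.
move=> hv [b1 [pos1 [_ ind1]]] [b2 [_ [span2 _]]].
have H i : exists c : 'I_n2 -> K, inP v (b1 i - \sum_j iota (c j) * b2 j).
  exact: span2 (pos1 i).
pose c i := projT1 (cid (H i)).
have hc i : geq v 1 (b1 i - \sum_j iota (c i j) * b2 j).
  exact: geq_inP hv (projT2 (cid (H i))).
pose C := \matrix_(i < n1, j < n2) c i j.
have: row_free C.
  apply: inj_row_free => x hx.
  have E : \sum_i iota (x 0 i) * b1 i =
    \sum_i iota (x 0 i) * (b1 i - \sum_j iota (c i j) * b2 j)
    + \sum_j iota ((x *m C) 0 j) * b2 j.
    under [X in _ = _ + X]eq_bigr => j _ do rewrite !mxE rmorph_sum mulr_suml.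
    rewrite exchange_big -big_split /=; apply: eq_bigr => i _.
    have -> : \sum_j iota (x 0 i * C i j) * b2 j
        = iota (x 0 i) * \sum_j iota (c i j) * b2 j.
      by rewrite mulr_sumr; apply: eq_bigr => j _; rewrite mxE rmorphM mulrA.
    by rewrite mulrBr subrK.
  have key : forall i, x 0 i = 0.
    apply: ind1; apply: inP_of_geq => //; rewrite E hx.
    rewrite [X in _ + X]big1 ?addr0; last by move=> j _; rewrite mxE rmorph0 mul0r.
    apply: (geq_sum hv) => i _.
    by have := geqM hv (geq_iota hv (x 0 i)) (hc i); rewrite add0r.
  by apply/matrixP => a i; rewrite ord1 key mxE.
clearbody C; rewrite -row_leq_rank => h; apply: leq_trans h _; exact: rank_leq_col.
Qed.

Lemma place_deg_uniq v n1 n2 : is_place iota v ->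
  place_deg iota v n1 -> place_deg iota v n2 -> n1 = n2.
Proof.
by move=> hv h1 h2; apply/eqP; rewrite eqn_leq !(place_deg_le hv) .
Qed.

Definition pdeg (v : F -> int) : nat :=
  match pselect (exists n, place_deg iota v n) with
  | left h => projT1 (cid h)
  | right _ => 0%N
  end.

Lemma pdegE v n : is_place iota v -> place_deg iota v n -> pdeg v = n.
Proof.
move=> hv hn; rewrite /pdeg; case: pselect => [h|]; last by case; exists n.
exact: place_deg_uniq hv (projT2 (cid h)) hn.
Qed.

Lemma pdegP v : (exists n, place_deg iota v n) -> place_deg iota v (pdeg v).
Proof.
by move=> h; rewrite /pdeg; case: pselect => [h'|//]; exact: (projT2 (cid h')).
Qed.

Lemma sum_supp (T : eqType) (h : T -> int) (s1 s2 : seq T) :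
  uniq s1 -> uniq s2 ->
  (forall x, h x != 0 -> x \in s1) -> (forall x, h x != 0 -> x \in s2) ->
  \sum_(x <- s1) h x = \sum_(x <- s2) h x.
Proof.
move=> u1 u2 h1 h2.
rewrite (bigID (fun x => h x != 0)) /= [X in _ + X]big1 ?addr0;
  last by move=> x /negPn/eqP.
rewrite [RHS](bigID (fun x => h x != 0)) /= [X in _ + X]big1 ?addr0;
  last by move=> x /negPn/eqP.
rewrite -big_filter -[RHS]big_filter; apply: perm_big; apply: uniq_perm; rewrite ?filter_uniq //.
move=> x; rewrite !mem_filter; case: eqP => /= hx; first by [].
have hx' : h x != 0 by apply/eqP.
by rewrite (h1 _ hx') (h2 _ hx').
Qed.

Lemma div_deg_list (G : (F -> int) -> int) e : div_deg iota G e ->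
  forall s : seq (F -> int), uniq s -> (forall v, G v != 0 -> v \in s) ->
  e = \sum_(p <- s) G p * (pdeg p)%:Z.
Proof.
move=> [n [ps [ds [inj [hp [supp ->]]]]]] s us hs.
have -> : \sum_(i < n) G (ps i) * (ds i)%:Z = \sum_(p <- map ps (enum 'I_n)) G p * (pdeg p)%:Z.
  rewrite big_map big_enum /=; apply: eq_bigr => i _.
  by case: (hp i) => hpi hdi; rewrite (pdegE hpi hdi).
apply: sum_supp => //.
- by rewrite map_inj_uniq ?enum_uniq.
- move=> v; have [->|/supp [i ->] _] := eqVneq (G v) 0; first by rewrite mul0r eqxx.
  by apply: map_f; rewrite mem_enum.
- by move=> v; have [->|/hs //] := eqVneq (G v) 0; rewrite mul0r eqxx.
Qed.

Lemma div_deg_of_list (G : (F -> int) -> int) (s : seq (F -> int)) :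
  uniq s -> (forall p, p \in s -> is_place iota p /\ exists n, place_deg iota p n) ->
  (forall v, G v != 0 -> v \in s) ->
  div_deg iota G (\sum_(p <- s) G p * (pdeg p)%:Z).
Proof.
move=> us hs supp.
pose p0 : F -> int := fun _ => 0.
exists (size s), (fun i : 'I_(size s) => nth p0 s i),
  (fun i : 'I_(size s) => pdeg (nth p0 s i)); split; [|split; [|split]].
- by move=> i j /eqP; rewrite nth_uniq // => /eqP/val_inj.
- move=> i; have [h1 h2] := hs _ (mem_nth p0 (ltn_ord i)); split=> //.
  exact: pdegP.
- move=> v /supp vs; have hi : (index v s < size s)%N by rewrite index_mem.
  by exists (Ordinal hi); rewrite /= nth_index.
- by rewrite (big_nth p0) big_mkord.
Qed.
End Deg.
Section Ell.
Variables (K : finFieldType) (F : fieldType) (iota : {rmorphism K -> F}).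

Lemma inL_geq (G : (F -> int) -> int) z :
  inL iota G z <-> (forall v, is_place iota v -> geq v (- G v) z).
Proof.
split.
  case=> [-> v _|h v hv]; first by left.
  by right; have := h v hv; lia.
move=> h; have [->|z0] := eqVneq z 0; first by left.
right=> v hv; case: (h v hv) => [/eqP|]; first by rewrite (negbTE z0).
lia.
Qed.

Lemma inL_lin (G : (F -> int) -> int) a x y :
  inL iota G x -> inL iota G y -> inL iota G (iota a * x + y).
Proof.
move=> /inL_geq hx /inL_geq hy; apply/inL_geq => v hv.
apply: (geqD hv) (hy v hv).
by have := geqM hv (geq_iota hv a) (hx v hv); rewrite add0r.
Qed.

Lemma ell_sub (G0 B : (F -> int) -> int) n0 z :
  ell iota G0 n0 -> z != 0 ->
  (forall w, inL iota B w -> inL iota G0 (z * w)) ->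
  exists n, (n <= n0)%N /\ ell iota B n.
Proof.
move=> [b [hb [indb spanb]]] z0 hmul.
pose comb (u : 'rV[K]_n0) := \sum_i iota (u 0 i) * b i.
have combD u u' : comb (u + u') = comb u + comb u'.
  by rewrite /comb -big_split; apply: eq_bigr => i _; rewrite mxE rmorphD mulrDl.
have combZ a u : comb (a *: u) = iota a * comb u.
  by rewrite /comb mulr_sumr; apply: eq_bigr => i _; rewrite mxE rmorphM mulrA.
have comb0 : comb 0 = 0.
  by rewrite /comb big1 // => i _; rewrite mxE rmorph0 mul0r.
have comb_sum m (f : 'I_m -> 'rV[K]_n0) : comb (\sum_j f j) = \sum_j comb (f j).
  exact: (big_morph comb combD comb0).
have comb_inj u : comb u = 0 -> u = 0.
  move=> h; apply/matrixP => a i; rewrite ord1 mxE.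
  exact: (indb (fun i => u 0 i) h i).
pose W (u : 'rV[K]_n0) := `[< inL iota B (comb u / z) >].
have W0 : W 0 by apply/asboolP; rewrite comb0 mul0r; left.
have WD a u u' : W u -> W u' -> W (a *: u + u').
  move=> /asboolP h /asboolP h'; apply/asboolP.
  by rewrite combD combZ mulrDl -mulrA; exact: inL_lin.
pose S := [seq u <- enum 'rV[K]_n0 | W u].
pose M := \matrix_(i < size S) (nth 0 S i : 'rV[K]_n0).
have WM x : W (x *m M).
  rewrite mulmx_sum_row; apply: (big_ind W) => //.
    by move=> u u' hu hu'; have := WD 1 u u' hu hu'; rewrite scale1r.
  move=> i _; have := WD (x 0 i) (row i M) 0 _ W0; rewrite addr0; apply.
  rewrite rowK.
  have : nth 0 S i \in S by apply: mem_nth.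
  by rewrite mem_filter => /andP[].
pose R := row_base M.
have WR j : W (row j R).
  have : (row j R <= M)%MS by rewrite -(eq_row_base M) row_sub.
  by case/submxP => x ->; exact: WM.
exists (\rank M); split; first exact: rank_leq_col.
exists (fun j => comb (row j R) / z); split; [|split].
- by move=> j; have /asboolP := WR j.
- move=> c hc.
  pose cr := \row_j c j.
  have h1 : comb (cr *m R) / z = 0.
    rewrite -hc mulmx_sum_row comb_sum mulr_suml; apply: eq_bigr => j _.
    by rewrite combZ mxE mulrA.
  have h2 : comb (cr *m R) = 0.
    by move: h1 => /eqP; rewrite mulf_eq0 invr_eq0 (negbTE z0) orbF => /eqP.
  have : cr *m R == 0 by apply/eqP; exact: comb_inj.
  rewrite mulmx_free_eq0 ?row_base_free // => /eqP hcr j.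
  by move: hcr => /rowP /(_ j); rewrite !mxE.
- move=> w hw.
  have [c hc] := spanb _ (hmul w hw).
  pose u := \row_i c i.
  have hu : comb u = z * w.
    by rewrite hc /comb; apply: eq_bigr => i _; rewrite mxE.
  have Wu : W u by apply/asboolP; rewrite hu mulrC mulKf.
  have uS : u \in S by rewrite mem_filter Wu mem_enum.
  have : (u <= R)%MS.
    rewrite (eq_row_base M).
    have hi : (index u S < size S)%N by rewrite index_mem.
    have := row_sub (Ordinal hi) M; rewrite rowK /= nth_index //.
  case/submxP => x hx; exists (fun j => x 0 j).
  have -> : w = comb u / z by rewrite hu mulrC mulKf.
  rewrite hx mulmx_sum_row comb_sum mulr_suml; apply: eq_bigr => j _.
  by rewrite combZ mulrA.
Qed.
End Ell.
Section Vanish.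
Variables (K : finFieldType) (F : fieldType) (iota : {rmorphism K -> F}).

Lemma vanish (g : nat) (G : (F -> int) -> int) (s : seq (F -> int)) z :
  is_genus iota g -> uniq s ->
  (forall p, p \in s -> is_place iota p /\ exists n, place_deg iota p n) ->
  (forall v, G v != 0 -> v \in s) ->
  \sum_(p <- s) G p * (pdeg iota p)%:Z < 0 -> inL iota G z -> z = 0.
Proof.
move=> [[G0 [a0 [n0 [hG0 [hell hg]]]]] hmax] us hs supp hneg hz.
have [//|z0] := eqVneq z 0; exfalso.
have := hG0; case=> [n1 [ps0 [ds0 [inj0 [hp0 [supp0 _]]]]]].
pose s' := undup (s ++ map ps0 (enum 'I_n1)).
pose B := fun v => G0 v - G v.
have us' : uniq s' by apply: undup_uniq.
have hsB : div_deg iota B (\sum_(p <- s') B p * (pdeg iota p)%:Z).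
  apply: div_deg_of_list => //.
    move=> p; rewrite mem_undup mem_cat => /orP[/hs //|/mapP[i _ ->]].
    by case: (hp0 i) => h1 h2; split=> //; exists (ds0 i).
  move=> v; rewrite /B mem_undup mem_cat.
  have [G00|/supp0 [i ->] _] := eqVneq (G0 v) 0.
    by move=> h; rewrite supp //; move: h; rewrite G00 sub0r oppr_eq0.
  by rewrite orbC; apply/orP; left; apply/mapP; exists i; rewrite ?mem_enum.
have degB : \sum_(p <- s') B p * (pdeg iota p)%:Z =
    a0 - \sum_(p <- s) G p * (pdeg iota p)%:Z.
  under eq_bigr => p _ do rewrite /B mulrBl.
  rewrite sumrB -(div_deg_list hG0 us'); last first.
    move=> v h; rewrite mem_undup mem_cat; have [i ->] := supp0 _ h.
    by apply/orP; right; apply/mapP; exists i; rewrite ?mem_enum.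
  congr (_ - _); apply: sum_supp => //.
    move=> v; have [->|/supp h _] := eqVneq (G v) 0; first by rewrite mul0r eqxx.
    by rewrite mem_undup mem_cat h.
  by move=> v; have [->|/supp h _] := eqVneq (G v) 0; first by rewrite mul0r eqxx.
have [n [nle hellB]] : exists n, (n <= n0)%N /\ ell iota B n.
  apply: (ell_sub hell z0) => w /inL_geq hw; apply/inL_geq => v hv.
  move/inL_geq: hz => hz.
  have := geqM hv (hz v hv) (hw v hv).
  by rewrite /B; congr geq; ring.
have := hmax _ _ _ hsB hellB; rewrite degB.
move: hneg; rewrite -hg; set d := \sum_(p <- s) _.
move: nle; lia.
Qed.
End Vanish.
Lemma rat_deg1 (K : finFieldType) (F : fieldType) (iota : {rmorphism K -> F}) v :
  rational_place iota v -> place_deg iota v 1.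
Proof.
case=> hv hr; exists (fun _ => 1); split; [|split].
- by move=> _; rewrite -(rmorph1 iota) v_iota ?oner_eq0.
- move=> z /hr [c hc]; exists (fun _ => c).
  by rewrite big_ord1 mulr1.
- move=> c; rewrite big_ord1 mulr1 => h i; rewrite ord1.
  apply/eqP; apply: contraLR h => c0.
  by rewrite /inP negb_or fmorph_eq0 c0 v_iota // ltxx.
Qed.

Lemma geq_itau (K : finFieldType) (F : fieldType) (iota : {rmorphism K -> F})
  (sigma : {rmorphism F -> F}) tau (st : cancel sigma tau) (ts : cancel tau sigma)
  (v : F -> int) n k f :
  geq (fun z => v (iter n tau z)) k f -> geq v k (iter n tau f).
Proof. by case=> [->|h]; [rewrite (itau0 st ts); left | right]. Qed.

Lemma cong_itau (K : finFieldType) (F : fieldType) (iota : {rmorphism K -> F})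
  (sigma : {rmorphism F -> F}) tau (st : cancel sigma tau) (ts : cancel tau sigma)
  (si : forall c : K, sigma (iota c) = iota c)
  (P : F -> int) a b f c :
  cong iota (fun z => P (iter (a + b) tau z)) f c ->
  cong iota (fun z => P (iter a tau z)) (iter b tau f) c.
Proof.
rewrite /cong.
have -> : iter b tau f - iota c = iter b tau (f - iota c).
  by rewrite (itauB st ts) (itau_iota st ts si).
case=> [->|h]; first by rewrite (itau0 st ts); left.
by right; rewrite -iterD.
Qed.

Lemma cong_sum_mem (K : finFieldType) (F : fieldType) (iota : {rmorphism K -> F})
  v (hv : is_place iota v) (I : eqType) (r : seq I) (E : I -> F) (c : I -> K) :
  (forall i, i \in r -> cong iota v (E i) (c i)) ->
  cong iota v (\sum_(i <- r) E i) (\sum_(i <- r) c i).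
Proof.
elim: r => [|x r IH] H; first by rewrite !big_nil /cong rmorph0 subr0; left.
rewrite !big_cons; apply: (congD hv); first by apply: H; rewrite mem_head.
by apply: IH => i hi; apply: H; rewrite in_cons hi orbT.
Qed.

Lemma geq_sum_mem (K : finFieldType) (F : fieldType) (iota : {rmorphism K -> F})
  v (hv : is_place iota v) (I : eqType) (r : seq I) k (E : I -> F) :
  (forall i, i \in r -> geq v k (E i)) -> geq v k (\sum_(i <- r) E i).
Proof.
elim: r => [|x r IH] H; first by rewrite big_nil; left.
rewrite big_cons; apply: (geqD hv); first by apply: H; rewrite mem_head.
by apply: IH => i hi; apply: H; rewrite in_cons hi orbT.
Qed.


Local Notation pl P tau i j := (fun z => P i (iter j tau z)).

Theorem lemma2p4
  (K : finFieldType) (F : fieldType) (iota : {rmorphism K -> F}) (g : nat)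
  (sigma : {rmorphism F -> F}) (tau : F -> F)
  (N m l : nat) (P : 'I_N -> (F -> int)) (D : (F -> int) -> int) (e : int)
  (s : nat) (y : 'I_N -> m.-tuple K) (A0 : F) (A : nat -> F) (f : F) (t : nat) :
  is_function_field iota -> full_constant_field iota -> is_genus iota g ->
  (* sigma is an automorphism of F/F_q with inverse tau *)
  cancel sigma tau -> cancel tau sigma -> (forall c : K, sigma (iota c) = iota c) ->
  (0 < N)%N -> (0 < m)%N -> (0 < l)%N ->
  (* P_i^{sigma^j} has valuation v_{P_i} o tau^j; these mN places are
     pairwise distinct rational places *)
  (forall i (j : 'I_m), rational_place iota (fun z => P i (iter j tau z))) ->
  (forall i i' (j j' : 'I_m),
      (fun z => P i (iter j tau z)) = (fun z => P i' (iter j' tau z)) ->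
      i = i' /\ j = j') ->
  div_deg iota D e ->
  (* D^sigma = D *)
  (forall v, is_place iota v -> D (fun z => v (tau z)) = D v) ->
  (forall i (j : 'I_m), D (fun z => P i (iter j tau z)) = 0) ->
  (1 <= s <= m)%N ->
  inL iota (scale_div (kappa N m l s g e + l%:Z) D) A0 ->
  (forall k, (1 <= k <= s)%N -> inL iota (scale_div (kappa N m l s g e) D) (A k)) ->
  (forall i (j : nat), (j <= m - s)%N ->
     residue iota (fun z => P i (iter j tau z)) A0 +
     \sum_(1 <= k < s.+1)
        residue iota (fun z => P i (iter j tau z)) (A k) * nth (0%R : K) (tuple.tval (y i)) (j + k - 1)
     = 0) ->
  inL iota (scale_div l%:Z D) f ->
  (t <= #|[set i : 'I_N | [forall j : 'I_m,
             nth (0%R : K) (tuple.tval (y i)) j == residue iota (fun z => P i (iter j tau z)) f]]|)%N ->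
  ((kappa N m l s g e + l%:Z) * e)%:~R / (m - s + 1)%:R < (t%:R : rat) ->
  A0 + \sum_(1 <= k < s.+1) A k * iter k.-1 tau f = 0.
Proof.
move=> Hff Hfc Hg st ts si N0 m0 l0 Hrat Hdist HD HDs HDQ hs HA0 HA Hres Hf Ht Hineq.
set kap := kappa N m l s g e in HA0 HA Hineq *.
set Sset := [set i : 'I_N | _] in Ht.
case/andP: hs => hs1 hsm.
have plP i j : (j < m)%N -> rational_place iota (pl P tau i j) /\ D (pl P tau i j) = 0.
  by move=> hj; split; [exact: (Hrat i (Ordinal hj)) | exact: (HDQ i (Ordinal hj))].
pose LQ := [seq pl P tau i j | i <- enum Sset, j <- seq.iota 0 (m - s).+1].
have LQP p : p \in LQ ->
    exists i j, [/\ i \in Sset, (j <= m - s)%N & p = pl P tau i j].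
  case/allpairsP => -[i j] [hi hj ->]; exists i, j.
  move: hi hj; rewrite mem_enum mem_iota add0n ltnS => /= -> -> //.
have uLQ : uniq LQ.
  apply: allpairs_uniq; [exact: enum_uniq | exact: iota_uniq |].
  move=> [i j] [i' j'] /allpairsP [[a b] [_ hb [-> ->]]].
  move=> /allpairsP [[a' b'] [_ hb' [-> ->]]] h.
  move: hb hb' h; rewrite !mem_iota !add0n /= => hb hb' h.
  have hbm : (b < m)%N by lia.
  have hbm' : (b' < m)%N by lia.
  have [-> /(congr1 val) /= ->] := Hdist a a' (Ordinal hbm) (Ordinal hbm') h.
  by [].
have gA0 v : is_place iota v -> geq v (- ((kap + l%:Z) * D v)) A0.
  by move=> hv; have := (inL_geq _ _ _).1 HA0 v hv; rewrite /scale_div.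
have gA k v : (1 <= k <= s)%N -> is_place iota v -> geq v (- (kap * D v)) (A k).
  by move=> hk hv; have := (inL_geq _ _ _).1 (HA k hk) v hv; rewrite /scale_div.
have gf n v : is_place iota v -> geq v (- (l%:Z * D v)) (iter n tau f).
  move=> hv; apply: (geq_itau iota st ts).
  have := (inL_geq _ _ _).1 Hf _ (place_itau st ts si n hv).
  by rewrite /scale_div (D_itau st ts si HDs n hv).
have gterm k v : (1 <= k <= s)%N -> is_place iota v ->
    geq v (- ((kap + l%:Z) * D v)) (A k * iter k.-1 tau f).
  move=> hk hv; have := geqM hv (gA k v hk hv) (gf k.-1 v hv).
  by rewrite -opprD -mulrDl.
have gZ v : is_place iota v ->
    geq v (- ((kap + l%:Z) * D v)) (A0 + \sum_(1 <= k < s.+1) A k * iter k.-1 tau f).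
  move=> hv; apply: (geqD hv); first exact: gA0.
  apply: (geq_sum_mem hv) => k; rewrite mem_index_iota => hk.
  by apply: gterm.
pose G := fun v => (kap + l%:Z) * D v - ((v \in LQ) : nat)%:Z.
have HD' := HD.
case: HD' => [nD [psD [dsD [injD [hpD [suppD _]]]]]].
pose LD := map psD (enum 'I_nD).
pose sl := undup (LD ++ LQ).
have usl : uniq sl by apply: undup_uniq.
have suppD' v : D v != 0 -> v \in sl.
  by move=> /suppD [i ->]; rewrite mem_undup mem_cat map_f ?mem_enum.
have LQsl v : v \in LQ -> v \in sl by move=> h; rewrite mem_undup mem_cat h orbT.
apply: (vanish (iota := iota) (g := g) (G := G) (s := sl) Hg usl).
- move=> p; rewrite mem_undup mem_cat => /orP[/mapP [i _ ->]|/LQP [i [j [_ hj ->]]]].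
    by case: (hpD i) => h1 h2; split=> //; exists (dsD i).
  have hjm : (j < m)%N by lia.
  have [hr _] := plP i j hjm; split; first by case: hr.
  by exists 1%N; apply: rat_deg1.
- move=> v; have [D0|/suppD' //] := eqVneq (D v) 0.
  rewrite /G D0 mulr0 sub0r oppr_eq0.
  by case hv: (v \in LQ) => //; rewrite LQsl.
- have sz (r : seq (F -> int)) : \sum_(p <- r) (1 : int) = (size r)%:Z.
    by elim: r => [|x r IH]; rewrite ?big_nil ?big_cons ?IH //=; lia.
  have hsum : \sum_(p <- sl) G p * (pdeg iota p)%:Z = (kap + l%:Z) * e - (size LQ)%:Z.
    rewrite /G; under eq_bigr => p _ do rewrite mulrBl -mulrA.
    rewrite sumrB -mulr_sumr -(div_deg_list HD usl suppD'); congr (_ - _).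
    rewrite (@sum_supp _ (fun p => ((p \in LQ) : nat)%:Z * (pdeg iota p)%:Z) sl LQ) //;
      last 2 first.
      + by move=> x; case hx: (x \in LQ) => //; rewrite LQsl.
      + by move=> x; case hx: (x \in LQ).
    rewrite -sz big_seq [RHS]big_seq; apply: eq_bigr => p hp; rewrite hp.
    have [i [j [_ hj ->]]] := LQP _ hp; have hjm : (j < m)%N by lia.
    have [hr _] := plP i j hjm.
    by rewrite (pdegE (proj1 hr) (rat_deg1 hr)).
  rewrite hsum size_allpairs -cardE size_iota.
  have h1 : (kap + l%:Z) * e < (t * (m - s + 1))%N%:Z.
    move: Hineq; rewrite ltr_pdivrMr; last by rewrite ltr0n addn1.
    rewrite -natrM -(ltr_int rat); congr (_ < _).
  have h2 : (t * (m - s + 1) <= #|Sset| * (m - s).+1)%N.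
    by rewrite addn1 leq_mul2r Ht orbT.
  move: h1 h2; move: (t * _)%N (#|Sset| * _)%N ((kap + l%:Z) * e) => a b c.
  lia.
- apply/inL_geq => v hv.
  have [vin|vnin] := boolP (v \in LQ); last first.
    by rewrite /G (negbTE vnin) subr0; exact: gZ.
  have [i [j [hi hj ev]]] := LQP _ vin.
  have hjm : (j < m)%N by lia.
  have [hr D0] := plP i j hjm.
  rewrite /G vin ev D0 mulr0 sub0r opprK.
  rewrite ev in hv.
  have hc : cong iota (pl P tau i j) (A0 + \sum_(1 <= k < s.+1) A k * iter k.-1 tau f)
      (residue iota (pl P tau i j) A0 + \sum_(1 <= k < s.+1)
         residue iota (pl P tau i j) (A k) * nth (0 : K) (tuple.tval (y i)) (j + k - 1)).
    apply: (congD hv).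
      by apply: residueP => //; have := gA0 _ hv; rewrite D0 mulr0 oppr0.
    apply: (cong_sum_mem hv) => k; rewrite mem_index_iota => hk.
    have hk' : (1 <= k <= s)%N by lia.
    apply: (congM hv).
    - by have := gf k.-1 _ hv; rewrite D0 mulr0 oppr0.
    - by apply: residueP => //; have := gA k _ hk' hv; rewrite D0 mulr0 oppr0.
    have hjk : (j + k.-1 < m)%N by lia.
    apply: (cong_itau st ts si (P := P i) (a := j) (b := k.-1)).
    have -> : (j + k - 1 = j + k.-1)%N by lia.
    have [hr' D0'] := plP i _ hjk.
    move: hi; rewrite inE => /forallP /(_ (Ordinal hjk)) /eqP /= ->.
    apply: residueP => //.
    have := (inL_geq _ _ _).1 Hf _ (proj1 hr').
    by rewrite /scale_div D0' mulr0 oppr0.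
  by move: hc; rewrite Hres // /cong rmorph0 subr0.
Qed.
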